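(* Let $(\eta_t)_{t\ge1}$ and $(\gamma_t)_{t\ge1}$ be non-increasing sequences of positive learning rates and exploration factors with $\eta_t\le2\gamma_t$ for all $t$. With probability at least $1-\delta$, FTARLShannon guarantees $$\max_{a\in[K]}\mathrm{Regret}(a)\le\frac{\ln K}{\eta_T}+\frac{\ln(3K/\delta)}{2\gamma_T}+\ln(3/\delta)+\sum_{t=1}^T\Big(\frac{\eta_t}{2}+\gamma_t\Big)A_t.$$
   Context: Sleeping bandits with $K\ge2$ arms: in round $t$ an adaptive (non-oblivious) adversary reveals a set $\mathbb A_t\subseteq[K]$ of active arms (with $A_t=|\mathbb A_t|$) and selects losses $\ell_{i,t}\in[0,1]$; the learner pulls $i_t\in\mathbb A_t$ and observes $\hat\ell_t=\ell_{i_t,t}$. With $I_{i,t}=\mathbb 1\{i\in\mathbb A_t\}$, $\mathrm{Regret}(a)=\sum_{t=1}^TI_{a,t}(\ell_{i_t,t}-\ell_{a,t})$. FTARLShannon: $\tilde L_{i,0}=0$; in round $t$, $q_{i,t}=\frac{\exp(-\eta_t\tilde L_{i,t-1})}{\sum_j\exp(-\eta_t\tilde L_{j,t-1})}$, $p_{i,t}=\frac{I_{i,t}q_{i,t}}{\sum_jI_{j,t}q_{j,t}}$, draw $i_t\sim p_t$; set $\tilde\ell_{i,t}=\frac{\mathbb 1\{i_t=i\}\hat\ell_t}{p_{i,t}+\gamma_t}$ for active $i$ and $\tilde\ell_{i,t}=\hat\ell_t-\gamma_t\sum_{j\in\mathbb A_t}\tilde\ell_{j,t}$ for inactive $i$;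 update $\tilde L_{i,t}=\tilde L_{i,t-1}+\tilde\ell_{i,t}$. *)

(* Defs.v *)
From mathcomp Require Import all_boot all_order all_algebra.
From mathcomp Require Import reals sequences exp.
Set Implicit Arguments. Unset Strict Implicit. Unset Printing Implicit Defensive.
Import Order.TTheory GRing.Theory Num.Theory.
Local Open Scope ring_scope.

(* A (deterministic, adaptive) adversary is given by two
   functions of the learner's history (the chronological list of arms pulled
   in previous rounds):  act h = active set of the next round,
   loss h i = loss of arm i in the next round.  Round t (1-indexed) has a
   history of length t-1. *)

Section FTARL.
Variables (R : realType) (K : nat).

Definition qdist (eta_t : R) (L : 'I_K -> R) (i : 'I_K) : R :=
  expR (- (eta_t * L i)) / \sum_(j < K) expR (- (eta_t * L j)).

Definition pdist (A : {set 'I_K}) (q : 'I_K -> R) (i : 'I_K) : R :=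
  (i \in A)%:R * q i / \sum_(j in A) q j.

Definition lest (A : {set 'I_K}) (p : 'I_K -> R) (g : R) (it : 'I_K)
    (lhat : R) (i : 'I_K) : R :=
  if i \in A then (it == i)%:R * lhat / (p i + g)
  else lhat - g * \sum_(j in A) ((it == j)%:R * lhat / (p j + g)).

Variables (eta gamma : nat -> R)
          (act : seq 'I_K -> {set 'I_K}) (loss : seq 'I_K -> 'I_K -> R).

(* distribution p_t used after history h (round t = size h + 1), given the
   cumulative estimates L = tilde L_{t-1} *)
Definition probs_of (h : seq 'I_K) (L : 'I_K -> R) : 'I_K -> R :=
  pdist (act h) (qdist (eta (size h).+1) L).

Definition Lnext (h : seq 'I_K) (L : 'I_K -> R) (it : 'I_K) : 'I_K -> R :=
  fun i => L i + lest (act h) (probs_of h L) (gamma (size h).+1) it (loss h it) i.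

Fixpoint Lcum_aux (pre rest : seq 'I_K) (L : 'I_K -> R) : 'I_K -> R :=
  match rest with
  | [::] => L
  | x :: r => Lcum_aux (rcons pre x) r (Lnext pre L x)
  end.

Definition Lcum (h : seq 'I_K) : 'I_K -> R := Lcum_aux [::] h (fun _ => 0).

Definition ftarl_p (h : seq 'I_K) : 'I_K -> R := probs_of h (Lcum h).

(* probability that FTARLShannon pulls the arm sequence s in rounds 1..T *)
Definition path_prob (T : nat) (s : T.-tuple 'I_K) : R :=
  \prod_(t < T) ftarl_p (take t s) (tnth s t).

Definition regret (T : nat) (s : T.-tuple 'I_K) (a : 'I_K) : R :=
  \sum_(t < T) (a \in act (take t s))%:R *
      (loss (take t s) (tnth s t) - loss (take t s) a).

Definition weighted_active (T : nat) (s : T.-tuple 'I_K) : R :=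
  \sum_(t < T) (eta t.+1 / 2 + gamma t.+1) * #|act (take t s)|%:R.

End FTARL.

(* Main.v *)
Require Import Defs.
From mathcomp Require Import all_boot all_order all_algebra.
From mathcomp Require Import reals sequences exp.
From mathcomp Require boolp classical_sets functions interval_inference topology normedtype derive realfun convex.
From mathcomp Require Import ring lra.
From Stdlib Require Import FunctionalExtensionality.
Import Order.TTheory GRing.Theory Num.Theory.
Local Open Scope ring_scope.

Module Calc.
Import boolp classical_sets functions interval_inference topology normedtype derive realfun convex.
Import numFieldNormedType.Exports.
Local Open Scope classical_set_scope.

Section S.
Variable R : realType.

Lemma pade_aux (w : R) : 0 <= w -> (2 - w) * expR w <= 2 + w.
Proof.
move=> w0.
pose g := (cst 2 + id) - (cst 2 - id) * (@expR R).
have dg : forall x : R, is_derive x (1:R) g (1 - ((2 - x) * expR x - expR x)).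
  move=> x. rewrite /g.
  apply: is_derive_eq.
  rewrite /= /cst /=. rewrite !add0r.
  have -> : ((fun=> (2:R)) - id) x = 2 - x by [].
  have E : forall a b : R, a *: b = a * b by [].
  rewrite !E. ring.
have key : forall x : R, (1 - x) * expR x <= 1.
  move=> x; have h := expR_ge1Dx (- x).
  have := ler_wpM2r (expR_ge0 x) h.
  by rewrite -expRD addNr expR0.
have := @ger0_derive1_ndecry R g 0.
move=> H; have : g 0 <= g w.
  apply: H => //.
- move=> x _; rewrite derive1E derive_val.
  have := key x; lra.
- apply: derivable_within_continuous => x _; exact: ex_derive.
have gE : forall y, g y = 2 + y - (2 - y) * expR y by [].
rewrite !gE expR0; lra.
Qed.

Lemma quad_aux (w : R) : 0 <= w -> 1 <= (1 - w + w * w / 2) * expR w.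
Proof.
move=> w0.
pose g := (cst 1 - id + cst (2^-1) * (id * id)) * (@expR R).
have dg : forall x : R, is_derive x (1:R) g ((x * x / 2) * expR x).
  move=> x. rewrite /g.
  apply: is_derive_eq.
  rewrite /= /cst /=. 
  have E : forall a b : R, a *: b = a * b by [].
  rewrite !E.
  have -> : ((fun=> (1:R)) - id + (fun=> 2^-1) * (id * id)) x = 1 - x + 2^-1 * (x * x) by [].
  have -> : (id * id) x = x * x :> R by [].
  by field.
have gE : forall y, g y = (1 - y + 2^-1 * (y * y)) * expR y by [].
have : g 0 <= g w.
  apply: ger0_derive1_ndecry => //.
  - move=> z _; rewrite derive1E; have [_ ->] := dg z.
    apply: mulr_ge0; last exact: expR_ge0.
    by apply: divr_ge0 => //; rewrite -expr2 sqr_ge0.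
  - apply: derivable_within_continuous => z _; exact: ex_derive.
by rewrite !gE expR0; lra.
Qed.

Local Open Scope convex_scope.
Lemma convex_aux (r u : R) : 0 <= r <= 1 -> expR (r * u) <= r * expR u + (1 - r).
Proof.
case/andP=> r0 r1.
have := convex_expR (Itv01 r0 r1) u 0.
have E : forall a b : R^o, a <| Itv01 r0 r1 |> b = r * a + (1 - r) * b.
  by move=> a b; rewrite /conv /=.
rewrite !E mulr0 addr0 expR0 mulr1 //.
Qed.
End S.
End Calc.


Section Prob.
Variables (R : realType) (K : nat) (P : seq 'I_K -> 'I_K -> R).

Fixpoint Ex n (h : seq 'I_K) (F : seq 'I_K -> R) : R :=
  if n is n'.+1 then \sum_(x < K) P h x * Ex n' (rcons h x) F else F h.

Lemma sum_tupleS n (G : n.+1.-tuple 'I_K -> R) :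
  \sum_(s : n.+1.-tuple 'I_K) G s =
  \sum_(x : 'I_K) \sum_(s : n.-tuple 'I_K) G [tuple of x :: s].
Proof.
rewrite pair_big /=.
rewrite (reindex (fun p : 'I_K * n.-tuple 'I_K => [tuple of p.1 :: p.2])) /=.
  by apply: eq_bigr => -[x s].
exists (fun t => (thead t, [tuple of behead t])).
  by move=> [x s] _; rewrite theadE; congr pair; apply: val_inj.
by move=> t _; rewrite /= [in RHS](tuple_eta t).
Qed.

Lemma Ex_tuple n h F :
  Ex n h F = \sum_(s : n.-tuple 'I_K)
     (\prod_(t < n) P (h ++ take t s) (tnth s t)) * F (h ++ s).
Proof.
elim: n h => [|n IH] h /=.
  rewrite (big_pred1 [tuple]); last by move=> s; rewrite /= (tuple0 s); apply/eqP.
  by rewrite big_ord0 mul1r cats0.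
rewrite sum_tupleS; apply: eq_bigr => x _.
rewrite IH mulr_sumr; apply: eq_bigr => s _.
rewrite big_ord_recl /= cats0 -mulrA; congr (_ * _).
rewrite cat_rcons; congr (_ * _).
apply: eq_bigr => t _; rewrite tnthS; congr (P _ _).
by rewrite -cat_rcons.
Qed.

Lemma Ex_scale n h c F : Ex n h (fun s => c * F s) = c * Ex n h F.
Proof.
elim: n h => [|n IH] h //=.
rewrite mulr_sumr; apply: eq_bigr => x _; rewrite IH; ring.
Qed.

Hypothesis P_ge0 : forall h x, 0 <= P h x.

Lemma Ex_mono n h F G : (forall s, F s <= G s) -> Ex n h F <= Ex n h G.
Proof.
move=> FG; elim: n h => [|n IH] h //=.
by apply: ler_sum => x _; apply: ler_wpM2l => //.
Qed.

Lemma Ex_one n h : (forall h, \sum_(x < K) P h x = 1) -> Ex n h (fun _ => 1) = 1.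
Proof.
move=> P1; elim: n h => [|n IH] h //=.
under eq_bigr => x _ do rewrite IH mulr1.
exact: P1.
Qed.

Variables (D : seq 'I_K -> 'I_K -> R) (x0 : 'I_K).

Definition Wsum (s : seq 'I_K) : R :=
  \sum_(0 <= t < size s) D (take t s) (nth x0 s t).

Lemma Wsum_rcons h x : Wsum (rcons h x) = Wsum h + D h x.
Proof.
rewrite /Wsum size_rcons big_nat_recr //=.
rewrite -cats1 take_size_cat // nth_cat ltnn subnn /=.
congr (_ + _); apply: eq_big_nat => t /andP[_ ht].
by rewrite takel_cat ?(ltnW ht) // nth_cat ht.
Qed.

Hypothesis D_step : forall h, \sum_(x < K) P h x * expR (D h x) <= 1.

Lemma Ex_exp_le1 n h : Ex n h (fun s => expR (Wsum s - Wsum h)) <= 1.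
Proof.
elim: n h => [|n IH] h /=.
  by rewrite subrr expR0.
apply: le_trans (D_step h); apply: ler_sum => x _.
apply: ler_wpM2l => //.
have -> : (fun s => expR (Wsum s - Wsum h)) =
          (fun s => expR (D h x) * expR (Wsum s - Wsum (rcons h x))).
  apply: functional_extensionality => s.
  by rewrite -expRD Wsum_rcons; congr expR; ring.
rewrite Ex_scale; rewrite -[X in _ <= X]mulr1.
by apply: ler_wpM2l; [exact: expR_ge0 | exact: IH].
Qed.

End Prob.

Lemma eqle (R : numDomainType) (x y : R) : x = y -> x <= y.
Proof. by move=> ->. Qed.

Section EW.
Variables (R : realType) (K : nat) (eta : nat -> R) (l : nat -> 'I_K -> R).
Hypothesis K0 : (0 < K)%N.
Hypothesis l_ge0 : forall t i, 0 <= l t i.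
Hypothesis eta_gt0 : forall t, (1 <= t)%N -> 0 < eta t.
Hypothesis eta_dec : forall t, (1 <= t)%N -> eta t.+1 <= eta t.

Definition Lc n (i : 'I_K) : R := \sum_(0 <= t < n) l t i.
Definition Phi (e : R) (L : 'I_K -> R) : R :=
  ln ((\sum_(i < K) expR (- (e * L i))) / K%:R) / e.

Lemma K_gt0 : 0 < K%:R :> R.
Proof. by rewrite ltr0n. Qed.

Lemma Phi0 e : Phi e (fun _ => 0) = 0.
Proof.
rewrite /Phi.
under eq_bigr => i _ do rewrite mulr0 oppr0 expR0.
rewrite sumr_const card_ord divff ?ln1 ?mul0r //.
by rewrite gt_eqF // K_gt0.
Qed.

Lemma sumexp_gt0 e (L : 'I_K -> R) : 0 < \sum_(i < K) expR (- (e * L i)).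
Proof.
rewrite (bigD1 (Ordinal K0)) //=.
by rewrite ltr_wpDr ?expR_gt0 // sumr_ge0 // => *; apply: expR_ge0.
Qed.

Lemma Phi_mono e e' L : 0 < e' -> e' <= e -> Phi e' L <= Phi e L.
Proof.
move=> e'0 e'e.
have e0 : 0 < e by apply: lt_le_trans e'e.
set S := \sum_(i < K) expR (- (e * L i)).
set S' := \sum_(i < K) expR (- (e' * L i)).
have S0 : 0 < S by apply: sumexp_gt0.
have S'0 : 0 < S' by apply: sumexp_gt0.
have Kp := K_gt0.
set M := ln (S / K%:R).
set r := e' / e.
have r0 : 0 <= r by rewrite /r divr_ge0 // ltW.
have r1 : r <= 1 by rewrite /r ler_pdivrMr // mul1r.
have eM : expR M = S / K%:R by rewrite /M lnK // posrE divr_gt0.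
have key : S' / K%:R <= expR (r * M).
  have H : forall i, expR (- (e' * L i)) <=
      expR (r * M) * (r * (expR (- (e * L i)) / expR M) + (1 - r)).
    move=> i.
    have -> : - (e' * L i) = r * M + r * (- (e * L i) - M).
      rewrite /r; field; by rewrite gt_eqF.
    rewrite expRD; apply: ler_wpM2l; first exact: expR_ge0.
    by rewrite -expRB; apply: Calc.convex_aux; rewrite r0 r1.
  have H2 : S' <= expR (r * M) * (r * (S / expR M) + K%:R * (1 - r)).
    rewrite /S' (le_trans (ler_sum _ (fun i _ => H i))) //.
    rewrite -mulr_sumr big_split /= -mulr_sumr -mulr_suml sumr_const card_ord.
    by rewrite mulr_natl.
  rewrite ler_pdivrMr //; apply: le_trans H2 _.
  rewrite eM. have -> : S / (S / K%:R) = K%:R.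
    by field; rewrite !gt_eqF.
  rewrite [_ * K%:R]mulrC; apply: ler_wpM2l; first exact: expR_ge0.
  lra.
have : ln (S' / K%:R) <= r * M.
  by rewrite -[X in _ <= X]expRK ler_ln // ?posrE ?expR_gt0 ?divr_gt0.
rewrite /Phi -/S -/S' -/M /r => H.
rewrite ler_pdivrMr // mulrAC ler_pdivlMr //.
have := ler_wpM2r (ltW e0) H.
have -> : e' / e * M * e = M * e' by field; rewrite gt_eqF.
done.
Qed.

Definition qd t := qdist (eta t.+1) (Lc t).

Lemma LcS n i : Lc n.+1 i = Lc n i + l n i.
Proof. by rewrite /Lc big_nat_recr. Qed.

Lemma ew_step t :
  \sum_(i < K) qd t i * l t i - eta t.+1 / 2 * \sum_(i < K) qd t i * l t i ^+ 2
  <= Phi (eta t.+1) (Lc t) - Phi (eta t.+1) (Lc t.+1).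
Proof.
set e := eta t.+1.
have e0 : 0 < e by apply: eta_gt0.
set S0 := \sum_(i < K) expR (- (e * Lc t i)).
have S00 : 0 < S0 by apply: sumexp_gt0.
have Kp := K_gt0.
set Z := \sum_(i < K) qd t i * expR (- (e * l t i)).
have qE : forall i, qd t i = expR (- (e * Lc t i)) / S0 by [].
have S1E : \sum_(i < K) expR (- (e * Lc t.+1 i)) = Z * S0.
  rewrite /Z mulr_suml; apply: eq_bigr => i _.
  rewrite qE LcS mulrDr opprD expRD; field; by rewrite gt_eqF.
have q0 : forall i, 0 <= qd t i.
  by move=> i; rewrite qE divr_ge0 ?expR_ge0 // ltW.
have q1 : \sum_(i < K) qd t i = 1.
  rewrite (eq_bigr (fun i => expR (- (e * Lc t i)) / S0)) //.
  by rewrite -mulr_suml divff // gt_eqF.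
have Z0 : 0 < Z.
  have : 0 < Z * S0 by rewrite -S1E sumexp_gt0.
  by rewrite pmulr_lgt0.
have Zle : Z <= 1 - e * \sum_(i < K) qd t i * l t i
                 + e * e / 2 * \sum_(i < K) qd t i * l t i ^+ 2.
  have H : forall i, qd t i * expR (- (e * l t i)) <=
     qd t i - e * (qd t i * l t i) + e * e / 2 * (qd t i * l t i ^+ 2).
    move=> i.
    have x0 : 0 <= e * l t i by rewrite mulr_ge0 // ltW.
    have Q := @Calc.quad_aux R _ x0.
    have : expR (- (e * l t i)) <= 1 - e * l t i + e * l t i * (e * l t i) / 2.
      have := ler_wpM2r (expR_ge0 (- (e * l t i))) Q.
      have E : forall A, A * expR (e * l t i) * expR (- (e * l t i)) = A.
        by move=> A; rewrite -mulrA expRxMexpNx_1 mulr1.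
      by rewrite mul1r E.
    move=> /(ler_wpM2l (q0 i)) h; apply: le_trans h _.
    rewrite expr2; apply: eqle; ring.
  apply: le_trans (ler_sum _ (fun i _ => H i)) _.
  rewrite !big_split /= sumrN -!mulr_sumr q1.
  by apply: eqle.
have lnZ : ln Z <= Z - 1.
  have h : ln (1 + (Z - 1)) <= Z - 1 by apply: le_ln1Dx; lra.
  by move: h; rewrite addrCA subrr addr0.
rewrite /Phi -/e -/S0 S1E.
have -> : ln (Z * S0 / K%:R) = ln Z + ln (S0 / K%:R).
  by rewrite -mulrA lnM // posrE divr_gt0.
have -> : ln (S0 / K%:R) / e - (ln Z + ln (S0 / K%:R)) / e = - ln Z / e.
  by field; rewrite gt_eqF.
rewrite ler_pdivlMr //.
have : - ln Z >= 1 - Z by lra.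
move=> h; apply: le_trans h.
set a := \sum_(i < K) qd t i * l t i.
set b := \sum_(i < K) qd t i * l t i ^+ 2.
have : (a - e / 2 * b) * e = e * a - e * e / 2 * b by ring.
move=> ->. move: Zle; rewrite -/a -/b. lra.
Qed.

Lemma Phi_final a e L : 0 < e -> - Phi e L <= L a + ln K%:R / e.
Proof.
move=> e0; rewrite /Phi.
set S := \sum_(i < K) expR (- (e * L i)).
have Kp := K_gt0.
have Sa : expR (- (e * L a)) <= S.
  rewrite /S (bigD1 a) //=; rewrite lerDl sumr_ge0 // => *; exact: expR_ge0.
have S0 : 0 < S by apply: lt_le_trans Sa; exact: expR_gt0.
have : ln (expR (- (e * L a)) / K%:R) <= ln (S / K%:R).
  by rewrite ler_ln ?posrE ?divr_gt0 ?expR_gt0 // ler_pM2r // invr_gt0.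
rewrite ln_div ?posrE ?expR_gt0 // expRK => h.
have : (- (e * L a) - ln K%:R) / e <= ln (S / K%:R) / e.
  by rewrite ler_pM2r // invr_gt0.
have -> : (- (e * L a) - ln K%:R) / e = - (L a + ln K%:R / e).
  by field; rewrite gt_eqF.
lra.
Qed.

Lemma ew_inv n :
  \sum_(0 <= t < n) (\sum_(i < K) qd t i * l t i
     - eta t.+1 / 2 * \sum_(i < K) qd t i * l t i ^+ 2)
  <= - Phi (eta (maxn n 1)) (Lc n).
Proof.
elim: n => [|n IH].
  rewrite big_geq //.
  have -> : Lc 0 = (fun _ => 0) by apply: functional_extensionality => i; rewrite /Lc big_geq.
  by rewrite Phi0 oppr0.
rewrite big_nat_recr //=.
have h1 : - Phi (eta (maxn n 1)) (Lc n) <= - Phi (eta n.+1) (Lc n).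
  rewrite lerN2; apply: Phi_mono; first exact: eta_gt0.
  case: n {IH} => [|n] //=.
  by rewrite (maxn_idPl _) //; apply: eta_dec.
have h2 := ew_step n.
have -> : maxn n.+1 1 = n.+1 by rewrite (maxn_idPl _).
lra.
Qed.

Lemma ew_bound T a : (1 <= T)%N ->
  \sum_(0 <= t < T) (\sum_(i < K) qd t i * l t i
     - eta t.+1 / 2 * \sum_(i < K) qd t i * l t i ^+ 2)
  <= Lc T a + ln K%:R / eta T.
Proof.
move=> T1; apply: le_trans (ew_inv T) _.
rewrite (maxn_idPl T1); apply: Phi_final; exact: eta_gt0.
Qed.

End EW.

Section Round.
Variables (R : realType) (K : nat) (A : {set 'I_K}) (q : 'I_K -> R)
          (g lh : R) (x : 'I_K).
Hypothesis q_ge0 : forall i, 0 <= q i.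
Hypothesis q_sum : \sum_(i < K) q i = 1.
Hypothesis QA_gt0 : 0 < \sum_(j in A) q j.
Hypothesis g_gt0 : 0 < g.
Hypothesis xA : x \in A.
Hypothesis lh01 : 0 <= lh <= 1.

Let QA := \sum_(j in A) q j.
Let p := pdist A q.
Let lt := lest A p g x lh.
Let S := \sum_(j in A) lt j.

Lemma QA_le1 : QA <= 1.
Proof.
rewrite -q_sum /QA [X in _ <= X](bigID (fun j => j \in A)) /=.
by rewrite lerDl sumr_ge0.
Qed.

Lemma pA i : i \in A -> p i = q i / QA.
Proof. by move=> iA; rewrite /p /pdist iA mul1r. Qed.

Lemma p_ge0 i : 0 <= p i.
Proof. rewrite /p /pdist; apply: divr_ge0; [apply: mulr_ge0 => //; exact: ler0n | exact: ltW]. Qed.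

Lemma p_le1 i : p i <= 1.
Proof.
rewrite /p /pdist; case: (boolP (i \in A)) => iA; last by rewrite !mul0r ler01.
rewrite mul1r ler_pdivrMr // mul1r /QA (bigD1 i) //=.
by rewrite lerDl sumr_ge0.
Qed.

Lemma ltA i : i \in A -> lt i = (x == i)%:R * lh / (p i + g).
Proof. by move=> iA; rewrite /lt /lest iA. Qed.

Lemma px_g : 0 < p x + g.
Proof. by rewrite ltr_wpDl // p_ge0. Qed.

Lemma SE : S = lh / (p x + g).
Proof.
rewrite /S (bigD1 x) //= ltA // eqxx mul1r big1 ?addr0 //.
by move=> j /andP[jA /negbTE jx]; rewrite ltA // eq_sym jx mul0r mul0r.
Qed.

Lemma S_ge0 : 0 <= S.
Proof. rewrite SE; apply: divr_ge0; [by case/andP: lh01 | exact: ltW px_g]. Qed.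

Lemma SpxE : S * (p x + g) = lh.
Proof. by rewrite SE mulrAC -mulrA divff ?mulr1 // gt_eqF // px_g. Qed.

Lemma ltN i : i \notin A -> lt i = lh - g * S.
Proof.
move=> iA; rewrite /lt /lest (negbTE iA); congr (_ - g * _).
by rewrite /S; apply: eq_bigr => j jA; rewrite ltA.
Qed.

Lemma lt_ge0 i : 0 <= lt i.
Proof.
case: (boolP (i \in A)) => iA.
  rewrite ltA //; apply: divr_ge0; last exact: ltW (ltr_wpDl (p_ge0 i) g_gt0).
  apply: mulr_ge0; [exact: ler0n | by case/andP: lh01].
rewrite ltN // -SpxE; have := S_ge0; have := p_ge0 x; nra.
Qed.

Lemma sum_notA : \sum_(i | i \notin A) q i = 1 - QA.
Proof.
by rewrite -q_sum [X in _ = X - _](bigID (fun j => j \in A)) /= addrC addrK.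
Qed.

Lemma qxE : q x = p x * QA.
Proof. by rewrite pA // mulrVK // unitfE gt_eqF. Qed.

Lemma mean_lt : \sum_(i < K) q i * lt i = lh - g * S.
Proof.
rewrite (bigID (fun j => j \in A)) /=.
rewrite (bigD1 x) //= big1; last first.
  by move=> j /andP[jA /negbTE jx]; rewrite ltA // eq_sym jx !mul0r mulr0.
rewrite addr0 (eq_bigr (fun i => q i * (lh - g * S))); last by move=> i iA; rewrite ltN.
rewrite -mulr_suml sum_notA ltA // eqxx mul1r -SE qxE.
rewrite -SpxE; ring.
Qed.

Lemma sq_lt : \sum_(i < K) q i * lt i ^+ 2 <= S.
Proof.
rewrite (bigID (fun j => j \in A)) /=.
rewrite (bigD1 x) //= big1; last first.
  by move=> j /andP[jA /negbTE jx]; rewrite ltA // eq_sym jx !mul0r expr0n mulr0.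
rewrite addr0 (eq_bigr (fun i => q i * (lh - g * S) ^+ 2)); last by move=> i iA; rewrite ltN.
rewrite -mulr_suml sum_notA ltA // eqxx mul1r -SE qxE.
have h := SpxE.
have -> : lh - g * S = p x * S by rewrite -h; ring.
have Q1 := QA_le1.
have Q0 : 0 <= QA by apply: ltW.
have p0 := p_ge0 x. have p1 := p_le1 x.
have S0 := S_ge0.
have l1 : lh <= 1 by case/andP: lh01.
have pS : p x * S <= 1.
  have Sg := mulr_ge0 S0 (ltW g_gt0).
  rewrite -h in l1; move: l1; rewrite mulrDr; lra.
have e1 : p x * QA * S ^+ 2 + (1 - QA) * (p x * S) ^+ 2 <= p x * S * S.
  have : (1 - QA) * (p x * S) ^+ 2 <= (1 - QA) * (p x * S * S).
    apply: ler_wpM2l; first lra.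
    rewrite expr2; have : p x * p x <= p x by nra.
    nra.
  move=> h2; apply: le_trans (lerD (lexx _) h2) _; apply: eqle; rewrite expr2; ring.
apply: le_trans e1 _.
rewrite -[X in _ <= X]mul1r; apply: ler_wpM2r => //.
Qed.

Lemma round_regret a la :
  (a \in A)%:R * (lh - la) <=
  g * S + ((lh - g * S) - lt a) + (a \in A)%:R * (lt a - la).
Proof.
case: (boolP (a \in A)) => aA /=.
  by rewrite !mul1r; apply: eqle; ring.
rewrite !mul0r ltN // addr0 subrr addr0; apply: mulr_ge0; [exact: ltW | exact: S_ge0].
Qed.

End Round.

Lemma pade_step (R : realType) (pp g u : R) :
  0 <= pp -> 0 < g -> 0 <= u -> u <= 2 * g -> pp * expR (u / (pp + g)) <= pp + u.
Proof.
move=> p0 g0 u0 u2.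
case: (eqVneq pp 0) => [->|pn0]; first by rewrite mul0r add0r.
have pp0 : 0 < pp by rewrite lt_neqAle eq_sym pn0.
have pg : 0 < pp + g by lra.
set w := u / (pp + g).
have w0 : 0 <= w by rewrite /w divr_ge0 // ltW.
have uE : u = w * (pp + g) by rewrite /w mulrVK // unitfE gt_eqF.
have w2 : w < 2.
  have : w * (pp + g) < 2 * (pp + g) by rewrite -uE; lra.
  by rewrite ltr_pM2r.
have P := @Calc.pade_aux R w w0.
have h1 : pp * (2 + w) <= (pp + u) * (2 - w).
  have e : (pp + u) * (2 - w) - pp * (2 + w) = w * (2 * g - u).
    rewrite uE; ring.
  have : 0 <= w * (2 * g - u) by apply: mulr_ge0; lra.
  lra.
have h2 : (2 - w) * (pp * expR w) <= (2 - w) * (pp + u).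
  rewrite mulrCA; apply: le_trans (ler_wpM2l (ltW pp0) P) _.
  by rewrite [X in _ <= X]mulrC.
by move: h2; rewrite ler_pM2l // subr_gt0.
Qed.

Lemma sum_pick (R : realType) (K : nat) (A : {set 'I_K}) (a : 'I_K) (f : 'I_K -> R) :
  \sum_(i in A) (i == a)%:R * f i = (a \in A)%:R * f a.
Proof.
rewrite big_mkcond (bigD1 a) //= big1 ?addr0.
  by case: (a \in A); rewrite ?eqxx ?mul0r.
by move=> i /negbTE ia; rewrite ia mul0r; case: (i \in A).
Qed.

Arguments Lc {R K}. Arguments qd {R K}. Arguments Ex {R K}. Arguments Wsum {R K}.

Section Algo.
Variables (R : realType) (K : nat) (eta gamma : nat -> R)
          (act : seq 'I_K -> {set 'I_K}) (loss : seq 'I_K -> 'I_K -> R).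
Hypothesis K0 : (0 < K)%N.
Hypothesis gamma_gt0 : forall t, (1 <= t)%N -> 0 < gamma t.
Hypothesis act_ne0 : forall h, act h != set0.
Hypothesis loss01 : forall h i, 0 <= loss h i <= 1.

Local Notation p := (ftarl_p eta gamma act loss).
Local Notation Lcum := (Lcum eta gamma act loss).
Definition qh h := qdist (eta (size h).+1) (Lcum h).
Definition lth h x i := lest (act h) (p h) (gamma (size h).+1) x (loss h x) i.

Lemma pE h : p h = pdist (act h) (qh h).
Proof. by []. Qed.

Lemma qh_gt0 h i : 0 < qh h i.
Proof. by rewrite /qh /qdist divr_gt0 ?expR_gt0 // sumexp_gt0. Qed.

Lemma qh_ge0 h i : 0 <= qh h i.
Proof. exact: ltW (qh_gt0 h i). Qed.

Lemma qh_sum h : \sum_(i < K) qh h i = 1.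
Proof.
rewrite /qh /qdist -mulr_suml divff // gt_eqF //; exact: sumexp_gt0.
Qed.

Lemma QA_h h : 0 < \sum_(j in act h) qh h j.
Proof.
case/set0Pn: (act_ne0 h) => j jA.
rewrite (bigD1 j) //= ltr_wpDr ?qh_gt0 // sumr_ge0 // => i _; exact: qh_ge0.
Qed.

Lemma g_h (h : seq 'I_K) : 0 < gamma (size h).+1.
Proof. exact: gamma_gt0. Qed.

Lemma ph_ge0 h x : 0 <= p h x.
Proof. rewrite pE; apply: p_ge0; [exact: qh_ge0 | exact: QA_h]. Qed.

Lemma ph_out h x : x \notin act h -> p h x = 0.
Proof. by move=> xA; rewrite pE /pdist (negbTE xA) !mul0r. Qed.

Lemma ph_sumA h : \sum_(x in act h) p h x = 1.
Proof.
rewrite pE /pdist.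
rewrite (eq_bigr (fun x => qh h x / \sum_(j in act h) qh h j)); last first.
  by move=> x xA; rewrite xA mul1r.
rewrite -mulr_suml divff // gt_eqF //; exact: QA_h.
Qed.

Lemma ph_sum h : \sum_(x < K) p h x = 1.
Proof.
rewrite (bigID (fun x => x \in act h)) /= ph_sumA big1 ?addr0 //.
by move=> x; apply: ph_out.
Qed.

Lemma lth_ge0 h x i : 0 <= lth h x i.
Proof.
rewrite /lth pE.
have l01 := loss01 h x.
case: (boolP (x \in act h)) => xA.
  apply: lt_ge0 => //; solve [exact: qh_ge0 | exact: QA_h | exact: g_h].
case: (boolP (i \in act h)) => iA.
  rewrite ltA //; apply: divr_ge0.
    by apply: mulr_ge0; [exact: ler0n | case/andP: l01].
  apply: addr_ge0; [apply: p_ge0; [exact: qh_ge0 | exact: QA_h] | exact: ltW (g_h h)].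
rewrite /lest (negbTE iA) big1 ?mulr0 ?subr0; first by case/andP: l01.
move=> j jA; have -> : (x == j) = false.
  by apply/negbTE; apply: contraNneq xA => ->.
by rewrite !mul0r.
Qed.

Lemma conc_step h (al : 'I_K -> R) :
  (forall i, 0 <= al i <= 2 * gamma (size h).+1) ->
  \sum_(x < K) p h x * expR (\sum_(i in act h) al i * (lth h x i - loss h i)) <= 1.
Proof.
move=> al2.
set A := act h. set g := gamma (size h).+1.
set E := expR (- \sum_(i in A) al i * loss h i).
have H : forall x, x \in A ->
   p h x * expR (\sum_(i in A) al i * (lth h x i - loss h i))
   <= (p h x + al x * loss h x) * E.
  move=> x xA.
  have -> : \sum_(i in A) al i * (lth h x i - loss h i) =
            al x * loss h x / (p h x + g) - \sum_(i in A) al i * loss h i.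
    under eq_bigr => i _ do rewrite mulrBr.
    rewrite sumrB; congr (_ - _).
    rewrite (bigD1 x) //= big1 ?addr0.
      rewrite /lth pE ltA // eqxx mul1r -pE mulrA //.
    move=> j /andP[jA /negbTE jx].
    by rewrite /lth pE ltA // eq_sym jx !mul0r mulr0.
  rewrite expRD mulrA /E; apply: ler_wpM2r; first exact: expR_ge0.
  have := al2 x; case/andP => a0 a2.
  have l01 := loss01 h x; case/andP: l01 => l0 l1.
  apply: pade_step; [exact: ph_ge0 | exact: g_h | exact: mulr_ge0 |].
  apply: le_trans a2; rewrite -[X in _ <= X]mulr1; exact: ler_wpM2l.
rewrite (bigID (fun x => x \in A)) /= [X in _ + X]big1 ?addr0; last first.
  by move=> x xA; rewrite ph_out // mul0r.
apply: le_trans (ler_sum _ H) _.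
rewrite -mulr_suml big_split /= ph_sumA /E.
set z := \sum_(i in A) al i * loss h i.
have := expR_ge1Dx z => h1.
have := ler_wpM2r (expR_ge0 (- z)) h1.
by rewrite expRxMexpNx_1.
Qed.

Lemma Lcum_aux_rcons pre r x L :
  Lcum_aux eta gamma act loss pre (rcons r x) L =
  Lnext eta gamma act loss (pre ++ r) (Lcum_aux eta gamma act loss pre r L) x.
Proof.
elim: r pre L => [|y r IH] pre L /=; first by rewrite cats0.
by rewrite IH cat_rcons.
Qed.

Lemma Lcum_rcons h x i : Lcum (rcons h x) i = Lcum h i + lth h x i.
Proof. by rewrite /Defs.Lcum Lcum_aux_rcons /=. Qed.

Lemma round_h h x a : x \in act h ->
  (a \in act h)%:R * (loss h x - loss h a) <=
  gamma (size h).+1 * (\sum_(j in act h) lth h x j)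
  + (\sum_(i < K) qh h i * lth h x i - lth h x a)
  + (a \in act h)%:R * (lth h x a - loss h a).
Proof.
move=> xA.
have e := @mean_lt R K (act h) (qh h) (gamma (size h).+1) (loss h x) x
   (qh_ge0 h) (qh_sum h) (QA_h h) (g_h h) xA.
rewrite /lth pE e.
exact: (@round_regret R K (act h) (qh h) (gamma (size h).+1) (loss h x) x
   (qh_ge0 h) (QA_h h) (g_h h) xA (loss01 h x) a (loss h a)).
Qed.

Lemma sq_h h x : x \in act h ->
  \sum_(i < K) qh h i * lth h x i ^+ 2 <= \sum_(j in act h) lth h x j.
Proof.
move=> xA; rewrite /lth pE.
exact: (@sq_lt R K (act h) (qh h) (gamma (size h).+1) (loss h x) x
   (qh_ge0 h) (qh_sum h) (QA_h h) (g_h h) xA (loss01 h x)).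
Qed.


Variable x0 : 'I_K.
Variable T : nat.
Hypothesis T1 : (1 <= T)%N.
Hypothesis eta_gt0 : forall t, (1 <= t)%N -> 0 < eta t.
Hypothesis eta_dec : forall t, (1 <= t)%N -> eta t.+1 <= eta t.

Definition lts (s : seq 'I_K) t i := lth (take t s) (nth x0 s t) i.
Definition Sa (s : seq 'I_K) t := \sum_(j in act (take t s)) lts s t j.

Lemma Lcum_take s t : (t <= size s)%N -> Lcum (take t s) = Lc (lts s) t.
Proof.
elim: t => [|t IH] ts; apply: functional_extensionality => i.
  by rewrite take0 /Lc big_geq.
by rewrite (take_nth x0) // Lcum_rcons IH ?(ltnW ts) // LcS.
Qed.

Lemma qh_take s t : (t <= size s)%N -> qh (take t s) = qd eta (lts s) t.
Proof. by move=> ts; rewrite /qh size_takel // (Lcum_take _ _ ts). Qed.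

Lemma regret_det (s : T.-tuple 'I_K) a :
  (forall t, (t < T)%N -> nth x0 s t \in act (take t s)) ->
  regret act loss s a <= ln K%:R / eta T
     + \sum_(0 <= t < T) (eta t.+1 / 2 + gamma t.+1) * Sa s t
     + \sum_(0 <= t < T) (a \in act (take t s))%:R * (lts s t a - loss (take t s) a).
Proof.
move=> allA.
have sz : size s = T by rewrite size_tuple.
have reg : regret act loss s a = \sum_(0 <= t < T) (a \in act (take t s))%:R *
     (loss (take t s) (nth x0 s t) - loss (take t s) a).
  by rewrite /regret big_mkord; apply: eq_bigr => t _; rewrite (tnth_nth x0).
have step : forall t, (0 <= t < T)%N ->
   (a \in act (take t s))%:R * (loss (take t s) (nth x0 s t) - loss (take t s) a)
   <= gamma t.+1 * Sa s t
      + (\sum_(i < K) qd eta (lts s) t i * lts s t i - lts s t a)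
      + (a \in act (take t s))%:R * (lts s t a - loss (take t s) a).
  move=> t /andP[_ tT].
  have tS : (t <= size s)%N by rewrite sz ltnW.
  have := round_h (take t s) (nth x0 s t) a (allA t tT).
  by rewrite size_takel // (qh_take _ _ tS).
have vS : forall t, (0 <= t < T)%N ->
    eta t.+1 / 2 * \sum_(i < K) qd eta (lts s) t i * lts s t i ^+ 2
    <= eta t.+1 / 2 * Sa s t.
  move=> t /andP[_ tT].
  have tS : (t <= size s)%N by rewrite sz ltnW.
  apply: ler_wpM2l; first by apply: divr_ge0 => //; apply: ltW; apply: eta_gt0.
  have := sq_h (take t s) (nth x0 s t) (allA t tT).
  by rewrite (qh_take _ _ tS).
have ew := @ew_bound R K eta (lts s) K0 (fun t i => lth_ge0 _ _ _) eta_gt0 eta_dec T a T1.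
rewrite reg; apply: le_trans (ler_sum_nat step) _.
rewrite !big_split /= sumrN.
have h3 := ler_sum_nat vS.
move: ew; rewrite big_split /= sumrN => ew.
have -> : \sum_(0 <= i < T) (eta i.+1 / 2 + gamma i.+1) * Sa s i =
   \sum_(0 <= i < T) eta i.+1 / 2 * Sa s i + \sum_(0 <= i < T) gamma i.+1 * Sa s i.
  by rewrite -big_split /=; apply: eq_bigr => i _; rewrite mulrDl.
have E : Lc (lts s) T a = \sum_(0 <= i < T) lts s i a by [].
rewrite E in ew.
lra.
Qed.


Hypothesis gamma_dec : forall t, (1 <= t)%N -> gamma t.+1 <= gamma t.
Hypothesis eta2 : forall t, (1 <= t)%N -> eta t <= 2 * gamma t.

Lemma gamma_mono m n : (1 <= m)%N -> (m <= n)%N -> gamma n <= gamma m.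
Proof.
move=> m1; elim: n => [|n IH]; first by rewrite leqn0 => /eqP m0; rewrite m0 in m1.
rewrite leq_eqVlt => /orP[/eqP <-|] //; rewrite ltnS => mn.
apply: le_trans (IH mn); apply: gamma_dec; exact: leq_trans m1 mn.
Qed.

Definition D1 (a : 'I_K) (h : seq 'I_K) (x : 'I_K) : R :=
  \sum_(i in act h) ((if (size h < T)%N then (i == a)%:R * (2 * gamma T) else 0)
                     * (lth h x i - loss h i)).
Definition D2 (h : seq 'I_K) (x : 'I_K) : R :=
  \sum_(i in act h) ((eta (size h).+1 / 2 + gamma (size h).+1) * (lth h x i - loss h i)).

Lemma D1_step a h : \sum_(x < K) p h x * expR (D1 a h x) <= 1.
Proof.
apply: conc_step => i.
have g0 := g_h h.
case: ifP => hT; last by apply/andP; split; lra.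
have gT : 0 < gamma T by apply: gamma_gt0.
have gle : gamma T <= gamma (size h).+1 by apply: gamma_mono.
case: (i == a) => /=; rewrite ?mulr1n ?mulr0n ?mul1r ?mul0r; apply/andP; split; lra.
Qed.

Lemma D2_step h : \sum_(x < K) p h x * expR (D2 h x) <= 1.
Proof.
apply: conc_step => i.
have g0 := g_h h.
have e0 := @eta_gt0 _ (ltn0Sn (size h)).
have e2 := @eta2 _ (ltn0Sn (size h)).
apply/andP; split; lra.
Qed.

Lemma path_ge0 (s : T.-tuple 'I_K) : 0 <= path_prob eta gamma act loss s.
Proof. by apply: prodr_ge0 => t _; apply: ph_ge0. Qed.

Lemma sum_path1 : \sum_(s : T.-tuple 'I_K) path_prob eta gamma act loss s = 1.
Proof.
have := @Ex_one R K p T [::] ph_sum.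
rewrite Ex_tuple => <-; apply: eq_bigr => s _; by rewrite mulr1.
Qed.

Lemma sum_path_exp D : (forall h, \sum_(x < K) p h x * expR (D h x) <= 1) ->
  \sum_(s : T.-tuple 'I_K) path_prob eta gamma act loss s * expR (Wsum D x0 s) <= 1.
Proof.
move=> Ds; have := @Ex_exp_le1 R K p ph_ge0 D x0 Ds T [::].
rewrite Ex_tuple => H; apply: le_trans H; apply: eqle; apply: eq_bigr => s _ /=.
have W0 : Wsum D x0 [::] = 0 by rewrite /Wsum big_geq.
by rewrite W0 subr0.
Qed.

Lemma W1E a (s : T.-tuple 'I_K) : Wsum (D1 a) x0 s =
  2 * gamma T * \sum_(0 <= t < T) (a \in act (take t s))%:R * (lts s t a - loss (take t s) a).
Proof.
rewrite /Wsum size_tuple mulr_sumr; apply: eq_big_nat => t /andP[_ tT].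
rewrite /D1 size_takel; last by rewrite size_tuple ltnW.
rewrite tT.
rewrite (eq_bigr (fun i => (i == a)%:R * (2 * gamma T * (lts s t i - loss (take t s) i)))).
  by rewrite sum_pick mulrCA.
by move=> i _; rewrite -mulrA.
Qed.

Lemma W2E (s : T.-tuple 'I_K) : Wsum D2 x0 s =
  \sum_(0 <= t < T) (eta t.+1 / 2 + gamma t.+1) *
      (Sa s t - \sum_(i in act (take t s)) loss (take t s) i).
Proof.
rewrite /Wsum size_tuple; apply: eq_big_nat => t /andP[_ tT].
rewrite /D2 size_takel; last by rewrite size_tuple ltnW.
by rewrite -mulr_sumr sumrB.
Qed.

Lemma loss_card h : \sum_(i in act h) loss h i <= #|act h|%:R.
Proof.
apply: le_trans (_ : \sum_(i in act h) (1 : R) <= _).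
  by apply: ler_sum => i _; case/andP: (loss01 h i).
by rewrite sumr_const.
Qed.

Variable delta : R.
Hypothesis d01 : 0 < delta < 1.

Definition bnd (s : T.-tuple 'I_K) :=
  ln (K%:R) / eta T + ln (3 * K%:R / delta) / (2 * gamma T)
  + ln (3 / delta) + weighted_active eta gamma act s.

Definition allAct (s : T.-tuple 'I_K) :=
  [forall t : 'I_T, nth x0 s t \in act (take t s)].

Lemma path_zero (s : T.-tuple 'I_K) : ~~ allAct s -> path_prob eta gamma act loss s = 0.
Proof.
move/forallPn => [t ht]; rewrite /path_prob (bigD1 t) //= (tnth_nth x0) ph_out //.
by rewrite mul0r.
Qed.

Lemma claim (s : T.-tuple 'I_K) : allAct s ->
  ~~ [forall a : 'I_K, regret act loss s a <= bnd s] ->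
  1 <= \sum_(a < K) delta / (3 * K%:R) * expR (Wsum (D1 a) x0 s)
       + delta / 3 * expR (Wsum D2 x0 s).
Proof.
move=> /forallP allA nE.
have allA' : forall t, (t < T)%N -> nth x0 s t \in act (take t s).
  by move=> t tT; exact: (allA (Ordinal tT)).
have Kp : 0 < K%:R :> R by rewrite ltr0n.
have dp : 0 < delta by case/andP: d01.
have c1p : 0 < delta / (3 * K%:R) by rewrite divr_gt0 // mulr_gt0.
have c2p : 0 < delta / 3 by rewrite divr_gt0.
have S1 : 0 <= \sum_(a < K) delta / (3 * K%:R) * expR (Wsum (D1 a) x0 s).
  by apply: sumr_ge0 => a _; rewrite mulr_ge0 ?expR_ge0 // ltW.
have E2 : 0 <= delta / 3 * expR (Wsum D2 x0 s) by rewrite mulr_ge0 ?expR_ge0 // ltW.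
case: (ltP (ln (3 / delta)) (Wsum D2 x0 s)) => [hZ|hZ].
  have : 3 / delta < expR (Wsum D2 x0 s).
    by rewrite -[X in X < _]lnK ?ltr_expR // posrE divr_gt0.
  rewrite -(ltr_pM2l c2p).
  have -> : delta / 3 * (3 / delta) = 1 by field; rewrite gt_eqF.
  lra.
case: (boolP [exists a, ln (3 * K%:R / delta) < Wsum (D1 a) x0 s]) => [/existsP[a ha]|hn].
  have : 3 * K%:R / delta < expR (Wsum (D1 a) x0 s).
    by rewrite -[X in X < _]lnK ?ltr_expR // posrE divr_gt0 // mulr_gt0.
  rewrite -(ltr_pM2l c1p).
  have -> : delta / (3 * K%:R) * (3 * K%:R / delta) = 1 by field; rewrite !gt_eqF.
  have : delta / (3 * K%:R) * expR (Wsum (D1 a) x0 s)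
         <= \sum_(b < K) delta / (3 * K%:R) * expR (Wsum (D1 b) x0 s).
    rewrite [X in _ <= X](bigD1 a) //= lerDl; apply: sumr_ge0 => b _; exact: mulr_ge0 (ltW c1p) (expR_ge0 _).
  lra.
exfalso; move/negP: nE; apply; apply/forallP => a.
have hW1 : Wsum (D1 a) x0 s <= ln (3 * K%:R / delta).
  by move/existsPn: hn => /(_ a); rewrite -leNgt.
have gT : 0 < gamma T by apply: gamma_gt0.
have rd := regret_det s a allA'.
rewrite W1E in hW1; rewrite W2E in hZ.
rewrite /bnd.
set SI := \sum_(0 <= t < T) (a \in act (take t s))%:R * (lts s t a - loss (take t s) a).
have hI : SI <= ln (3 * K%:R / delta) / (2 * gamma T).
  by rewrite ler_pdivlMr ?mulr_gt0 // mulrC.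
have hL : \sum_(0 <= t < T) (eta t.+1 / 2 + gamma t.+1) *
            \sum_(i in act (take t s)) loss (take t s) i
          <= weighted_active eta gamma act s.
  rewrite /weighted_active -(big_mkord xpredT (fun t => (eta t.+1 / 2 + gamma t.+1) * #|act (take t s)|%:R)).
  apply: ler_sum_nat => t _; apply: ler_wpM2l; last exact: loss_card.
  have e0 := @eta_gt0 _ (ltn0Sn t); have g0 := @gamma_gt0 _ (ltn0Sn t).
  apply: addr_ge0; [apply: divr_ge0; [exact: ltW|by []] | exact: ltW].
move: hZ; under eq_bigr => t _ do rewrite mulrBr.
rewrite sumrB => hZ.
move: rd; rewrite -/SI => rd.
lra.
Qed.

Lemma main_bound :
  1 - delta <=
  \sum_(s : T.-tuple 'I_K | [forall a : 'I_K, regret act loss s a <= bnd s])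
     path_prob eta gamma act loss s.
Proof.
have P1 := sum_path1.
rewrite (bigID (fun s : T.-tuple 'I_K => [forall a : 'I_K, regret act loss s a <= bnd s])) /= in P1.
set c1 := delta / (3 * K%:R). set c2 := delta / 3.
have Kp : 0 < K%:R :> R by rewrite ltr0n.
have dp : 0 < delta by case/andP: d01.
have c1p : 0 < c1 by rewrite divr_gt0 // mulr_gt0.
have c2p : 0 < c2 by rewrite divr_gt0.
have H : \sum_(s : T.-tuple 'I_K | ~~ [forall a : 'I_K, regret act loss s a <= bnd s])
           path_prob eta gamma act loss s <= delta.
  apply: le_trans (_ : \sum_(s : T.-tuple 'I_K) path_prob eta gamma act loss s *
      (\sum_(a < K) c1 * expR (Wsum (D1 a) x0 s) + c2 * expR (Wsum D2 x0 s)) <= _).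
    rewrite [X in X <= _]big_mkcond /=; apply: ler_sum => s _.
    have nn : 0 <= \sum_(a < K) c1 * expR (Wsum (D1 a) x0 s) + c2 * expR (Wsum D2 x0 s).
      apply: addr_ge0; last by rewrite mulr_ge0 ?expR_ge0 // ltW.
      by apply: sumr_ge0 => a _; rewrite mulr_ge0 ?expR_ge0 // ltW.
    case: ifP => hE; last by rewrite mulr_ge0 // path_ge0.
    case: (boolP (allAct s)) => hA; last by rewrite path_zero // mul0r.
    rewrite -[X in X <= _]mulr1; apply: ler_wpM2l; first exact: path_ge0.
    exact: claim.
  under eq_bigr => s _ do rewrite mulrDr mulr_sumr.
  rewrite big_split /= exchange_big /=.
  have h1 : forall a : 'I_K, \sum_(s : T.-tuple 'I_K) path_prob eta gamma act loss s *
              (c1 * expR (Wsum (D1 a) x0 s)) <= c1.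
    move=> a; under eq_bigr => s _ do rewrite mulrCA.
    rewrite -mulr_sumr -[X in _ <= X]mulr1; apply: ler_wpM2l; first exact: ltW.
    apply: sum_path_exp; exact: D1_step.
  have h2 : \sum_(s : T.-tuple 'I_K) path_prob eta gamma act loss s *
              (c2 * expR (Wsum D2 x0 s)) <= c2.
    under eq_bigr => s _ do rewrite mulrCA.
    rewrite -mulr_sumr -[X in _ <= X]mulr1; apply: ler_wpM2l; first exact: ltW.
    apply: sum_path_exp; exact: D2_step.
  apply: le_trans (lerD (ler_sum _ (fun a _ => h1 a)) h2) _.
  rewrite sumr_const card_ord /c1 /c2.
  have -> : delta / (3 * K%:R) *+ K = delta / 3.
    rewrite -mulr_natr; field; by rewrite gt_eqF.
  lra.
lra.
Qed.

End Algo.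

Theorem theoremA3 (R : realType) (K T : nat) (eta gamma : nat -> R)
    (act : seq 'I_K -> {set 'I_K}) (loss : seq 'I_K -> 'I_K -> R) (delta : R) :
  (2 <= K)%N -> (1 <= T)%N ->
  (forall t, (1 <= t)%N -> 0 < eta t) ->
  (forall t, (1 <= t)%N -> 0 < gamma t) ->
  (forall t, (1 <= t)%N -> eta t.+1 <= eta t) ->
  (forall t, (1 <= t)%N -> gamma t.+1 <= gamma t) ->
  (forall t, (1 <= t)%N -> eta t <= 2 * gamma t) ->
  (forall h, act h != set0) ->
  (forall h i, 0 <= loss h i <= 1) ->
  0 < delta < 1 ->
  1 - delta <=
  \sum_(s : T.-tuple 'I_K |
          [forall a : 'I_K,
             regret act loss s a <=
               ln (K%:R) / eta T + ln (3 * K%:R / delta) / (2 * gamma T)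
               + ln (3 / delta) + weighted_active eta gamma act s])
     path_prob eta gamma act loss s.
Proof.
move=> K2 T1 eg gg ed gd e2 an l01 d01.
have K0 : (0 < K)%N by apply: leq_trans K2.
exact: (@main_bound R K eta gamma act loss K0 gg an l01 (Ordinal K0) T T1 eg ed gd e2 delta d01).
Qed.
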